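(* Let $X$ be a proper, geodesically complete, $\delta$-hyperbolic Busemann space, vertically convergent with respect to $\infty_X$, with height function $h_X$ based at $\infty_X$, and let $d'_X$ be defined from an admissible monotone norm $N$. There is a constant $C$ depending only on $\delta$ such that for any points $p,q\in X$, any $d'_X$-geodesic $\gamma'$ from $p$ to $q$ and any $d_X$-geodesic $\gamma$ from $p$ to $q$, the total variations of $h_X$ satisfy $V_{\gamma'}(h_X)\ge V_\gamma(h_X)-C$.
   Context: $V_c(h_X)$ is the total variation of $h_X$ along a path $c$. $d'_X$ is the length metric on $X$ with path length $\sup_{0=t_0<\dots<t_n=1}\sum_iN(d_X(\gamma(t_i),\gamma(t_{i+1})),|h_X(\gamma(t_i))-h_X(\gamma(t_{i+1}))|)$, where $N$ is a norm on $\mathbb{R}^2$ with $N(1,1)=1$, $N(a,b)\ge(|a|+|b|)/2$, non-decreasing in each coordinate on $[0,\infty)^2$. *)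

(* Defs.v *)
From HB Require Import structures.
From mathcomp Require Import all_boot all_order all_algebra.
From mathcomp Require Import all_classical all_reals all_analysis.
Set Implicit Arguments. Unset Strict Implicit. Unset Printing Implicit Defensive.
Import Order.TTheory GRing.Theory Num.Theory.
Import numFieldNormedType.Exports.
Local Open Scope classical_set_scope.
Local Open Scope ring_scope.

Section Defs.
Context {R : realType} {X : metricType R}.
Local Notation d := (@mdist R X).

Definition proper_space : Prop :=
  forall (x : X) (r : R), compact [set y | d x y <= r].

Definition geodesic_for (D : X -> X -> R) (p q : X) (c : R -> X) : Prop :=
  [/\ c 0 = p, c 1 = q &
      forall s t, 0 <= s <= 1 -> 0 <= t <= 1 -> D (c s) (c t) = `|s - t| * D p q].

Definition egeodesic_for (D : X -> X -> \bar R) (p q : X) (c : R -> X) : Prop :=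
  [/\ c 0 = p, c 1 = q &
      forall s t, 0 <= s <= 1 -> 0 <= t <= 1 ->
        D (c s) (c t) = (`|s - t|%:E * D p q)%E].

Definition geodesic_space : Prop :=
  forall p q : X, exists c : R -> X, geodesic_for d p q c.

Definition busemann_space : Prop :=
  geodesic_space /\
  forall (p1 q1 p2 q2 : X) (c1 c2 : R -> X),
    geodesic_for d p1 q1 c1 -> geodesic_for d p2 q2 c2 ->
    forall t, 0 <= t <= 1 -> d (c1 t) (c2 t) <= (1 - t) * d p1 p2 + t * d q1 q2.

Definition geodesically_complete : Prop :=
  forall (a b : R) (c : R -> X), a <= b ->
    (forall s t, a <= s <= b -> a <= t <= b -> d (c s) (c t) = `|s - t|) ->
    exists c' : R -> X, (forall s t, d (c' s) (c' t) = `|s - t|) /\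
                        (forall t, a <= t <= b -> c' t = c t).

Definition gromov_product (w x y : X) : R := (d x w + d y w - d x y) / 2.

Definition hyperbolic (delta : R) : Prop :=
  forall w x y z : X,
    Num.min (gromov_product w x y) (gromov_product w y z) - delta
      <= gromov_product w x z.

Definition geodesic_ray (c : R -> X) : Prop :=
  forall s t, 0 <= s -> 0 <= t -> d (c s) (c t) = `|s - t|.

(** [c] and [r] define the same boundary point *)
Definition asymptotic_rays (c r : R -> X) : Prop :=
  exists B : R, forall t, 0 <= t -> d (c t) (r t) <= B.

(** vertical convergence w.r.t. the boundary point defined by the ray [r]:
    any two rays asymptotic to [r] eventually converge to each other
    (after a time shift). *)
Definition vertically_convergent (r : R -> X) : Prop :=
  forall c1 c2 : R -> X, geodesic_ray c1 -> geodesic_ray c2 ->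
    asymptotic_rays c1 r -> asymptotic_rays c2 r ->
    exists a : R, (fun t => d (c1 t) (c2 (t + a))) @ +oo --> (0 : R).

(** height function based at the boundary point of [r]
    (minus the Busemann function of [r]) *)
Definition height (r : R -> X) (x : X) : R :=
  lim ((fun t => t - d x (r t)) @ +oo).

Definition admissible_monotone_norm (N : R -> R -> R) : Prop :=
  [/\ (forall a b, 0 <= N a b),
      (forall a b, N a b = 0 -> a = 0 /\ b = 0),
      (forall l a b, N (l * a) (l * b) = `|l| * N a b) &
      (forall a b a' b', N (a + a') (b + b') <= N a b + N a' b')] /\
  [/\ N 1 1 = 1,
      (forall a b, (`|a| + `|b|) / 2 <= N a b) &
      (forall a b a' b', 0 <= a -> 0 <= b -> a <= a' -> b <= b' ->
         N a b <= N a' b')].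

Definition Nlength (N : R -> R -> R) (h : X -> R) (c : R -> X) : \bar R :=
  ereal_sup [set (\sum_(0 <= n < size s)
                    N (d (c (nth 1 (0 :: s) n)) (c (nth 1 (0 :: s) n.+1)))
                      `|h (c (nth 1 (0 :: s) n)) - h (c (nth 1 (0 :: s) n.+1))|)%:E
            | s in itv_partition 0 1].

Definition dprime (N : R -> R -> R) (h : X -> R) (x y : X) : \bar R :=
  ereal_inf [set Nlength N h c | c in
    [set c : R -> X | [/\ c 0 = x, c 1 = y & {within `[0, 1], continuous c}]]].

Definition path_variation (f : X -> R) (c : R -> X) : \bar R :=
  total_variation 0 1 (f \o c).

End Defs.

(* Main.v *)
Require Import Defs.
From HB Require Import structures.
From mathcomp Require Import all_boot all_order all_algebra.
From mathcomp Require Import all_classical all_reals all_analysis.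
From mathcomp Require Import ring lra.
Set Implicit Arguments. Unset Strict Implicit. Unset Printing Implicit Defensive.
Import Order.TTheory GRing.Theory Num.Theory.
Import numFieldNormedType.Exports.
Local Open Scope classical_set_scope.
Local Open Scope ring_scope.
Lemma lip_within_R (R : realType) (a b L : R) (g : R -> R) :
  (forall s t, a <= s <= b -> a <= t <= b -> `|g s - g t| <= L * `|s - t|) ->
  {within `[a, b], continuous g}.
Proof.
move=> Lg; apply/subspace_continuousP => x Ax.
apply/cvgrPdist_lt => e e0.
have Lp : 0 < `|L| + 1 by rewrite ltr_pwDr // normr_ge0.
have H : \forall t \near x, `|x - t| < e / (`|L| + 1).
  have H0 : (x --> x)%classic by apply: cvg_id.
  exact: ((@fcvgrPdist_lt _ _ (nbhs x) (nbhs_filter x) x).1 H0 _ (divr_gt0 e0 Lp)).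
rewrite near_withinE; near=> t => tA.
have xab : a <= x <= b by move: Ax; rewrite /= in_itv.
have tab : a <= t <= b by move: tA; rewrite /= in_itv.
apply: (le_lt_trans (Lg x t xab tab)).
apply: (@le_lt_trans _ _ ((`|L| + 1) * `|x - t|)).
  apply: ler_wpM2r; first exact: normr_ge0.
  by rewrite (le_trans (ler_norm L)) // lerDl.
rewrite mulrC -ltr_pdivlMr //. near: t. exact: H.
Unshelve. all: by end_near.
Qed.

Lemma maxr_le' (R : realDomainType) (a b c : R) : a <= c -> b <= c -> Num.max a b <= c.
Proof. by move=> ac bc; rewrite ge_max ac bc. Qed.

Lemma ar1 (R : realDomainType) (a m D c d : R) : 0 <= d -> a <= m + D + c -> a <= m + D + (c + 2 * d) - d.
Proof. lra. Qed.
Lemma ar2 (R : realDomainType) (a m D D' c d ft : R) : a <= ft + D' + c + d -> D' <= D -> ft <= m -> a <= m + D + (c + 2*d) - d.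
Proof. lra. Qed.
Lemma ar3 (R : realDomainType) (a M B d : R) : a <= M + d -> M <= B - d -> a <= B.
Proof. lra. Qed.

Lemma ar4 (R : realDomainType) (H f0 f1 ft P D dl d4 : R) : 0 <= dl -> P <= D ->
  2 * H = f0 + f1 + D -> H <= ft + d4 + 2 * dl * 2 + dl ->
  4 * d4 = (1 - 0) * P - (2 * ft - f0 - f1) -> D - 20 * dl <= (ft - f0) + (ft - f1).
Proof. lra. Qed.

Section Core.
Variables (R : realType) (dl P : R) (f : R -> R) (Hf : R -> R -> R).
Hypotheses (dl0 : 0 <= dl) (P0 : 0 <= P)
 (fL : forall s t, 0 <= s <= 1 -> 0 <= t <= 1 -> `|f s - f t| <= P * `|s - t|)
 (Hb : forall s t, 0 <= s -> s <= t -> t <= 1 ->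
    2 * Hf s t <= f s + f t + 2 * ((t - s) * P) - `|f s - f t|)
 (Hu : forall s z t, 0 <= s -> s <= z -> z <= t -> t <= 1 ->
    Hf s t <= Num.max (Hf s z) (Hf z t) + dl).

Definition EE s t m := (t - s) * P - (2 * m - f s - f t).

Lemma fL' s t : 0 <= s -> s <= t -> t <= 1 -> `|f s - f t| <= (t - s) * P.
Proof.
move=> s0 st t1; rewrite mulrC.
have -> : t - s = `|s - t| by rewrite distrC ger0_norm // subr_ge0.
apply: fL; apply/andP; split => //; lra.
Qed.

Lemma fcont a b : 0 <= a -> b <= 1 -> {within `[a, b], continuous f}.
Proof.
move=> a0 b1; apply: (@lip_within_R _ _ _ P) => x y /andP[ax xb] /andP[ay yb].
apply: fL; apply/andP; split; lra.
Qed.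

Lemma base s t m : 0 <= s -> s <= t -> t <= 1 -> f s <= m -> f t <= m ->
  (f s = m \/ f t = m) -> Hf s t <= m + EE s t m.
Proof.
move=> s0 st t1 fsm ftm Hm; have := Hb s0 st t1; rewrite /EE.
case: Hm => [fs|ft].
  have -> : `|f s - f t| = m - f t by rewrite fs ger0_norm // subr_ge0.
  rewrite fs; lra.
have -> : `|f s - f t| = m - f s by rewrite ft distrC ger0_norm // subr_ge0.
rewrite ft; lra.
Qed.

Lemma EE_ge0 s t : 0 <= s -> s <= t -> t <= 1 ->
  0 <= EE s t (f t) /\ 0 <= EE s t (f s).
Proof.
move=> s0 st t1; have := fL' s0 st t1; rewrite /EE => H.
have h1 := ler_norm (f s - f t).
have h2 : f t - f s <= `|f s - f t| by rewrite -normrN opprB ler_norm.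
split; lra.
Qed.


Definition cst (j : nat) := 2 * dl * j%:R.
Definition dv (x : R) (j : nat) := x / 2^+j.

Lemma cstS j : cst j.+1 = cst j + 2 * dl.
Proof. by rewrite /cst -addn1 natrD; ring. Qed.

Lemma cst0 : cst 0 = 0.
Proof. by rewrite /cst mulr0. Qed.

Lemma dv0 x : dv x 0 = x.
Proof. by rewrite /dv expr0 divr1. Qed.

Lemma dvS x j : dv x j.+1 = dv (x / 2) j.
Proof. by rewrite /dv exprS invfM mulrA. Qed.

Lemma dv_le x y j : x <= y -> dv x j <= dv y j.
Proof.
move=> xy; rewrite /dv; apply: ler_wpM2r => //.
Qed.

Definition OneSided j := forall s t m, 0 <= s -> s <= t -> t <= 1 ->
  (forall x, s <= x -> x <= t -> f x <= m) -> (f s = m \/ f t = m) ->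
  Hf s t <= m + dv (EE s t m) j + cst j.

Definition General j := forall s tau t, 0 <= s -> s <= tau -> tau <= t -> t <= 1 ->
  (forall x, s <= x -> x <= t -> f x <= f tau) ->
  Hf s t <= f tau + dv (EE s t (f tau)) j + cst j + dl.

Lemma general_from j : OneSided j -> General j.
Proof.
move=> OS s tau t s0 st tt t1 Hx.
have h := Hu s0 st tt t1.
have tau1 : tau <= 1 by apply: le_trans tt t1.
have tau0 : 0 <= tau by apply: le_trans s0 st.
have h1 := OS s tau (f tau) s0 st tau1 (fun x a b => Hx x a (le_trans b tt)) (or_intror erefl).
have h2 := OS tau t (f tau) tau0 tt t1 (fun x a b => Hx x (le_trans st a) b) (or_introl erefl).
have [e1 _] := EE_ge0 s0 st tau1.
have [_ e2] := EE_ge0 tau0 tt t1.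
have sum : EE s tau (f tau) + EE tau t (f tau) = EE s t (f tau) by rewrite /EE; ring.
have d1 : dv (EE s tau (f tau)) j <= dv (EE s t (f tau)) j by apply: dv_le; lra.
have d2 : dv (EE tau t (f tau)) j <= dv (EE s t (f tau)) j by apply: dv_le; lra.
have hm : Num.max (Hf s tau) (Hf tau t) <= f tau + dv (EE s t (f tau)) j + cst j.
  apply: maxr_le'; lra.
lra.
Qed.

Lemma one_sided0 : OneSided 0.
Proof.
move=> s t m s0 st t1 Hx Hm.
rewrite dv0 cst0 addr0.
apply: base => //; [apply: Hx => //; lra | apply: Hx => //; lra].
Qed.

Lemma one_sided_step j : OneSided j -> OneSided j.+1.
Proof.
move=> OS; have GS := general_from OS.
move=> s t m s0 st t1 Hx Hm.
rewrite dvS cstS.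
have fsm : f s <= m by apply: Hx => //; lra.
have ftm : f t <= m by apply: Hx => //; lra.
case: Hm => [fs|ft].
-
  pose B z := (z - s) * P - (m - f z).
  have EE0 : 0 <= EE s t m by have [_] := EE_ge0 s0 st t1; rewrite fs.
  have Bcont : {within `[s, t], continuous B}.
    apply: (@lip_within_R _ _ _ (P + P)) => x y /andP[sx xt] /andP[sy yt].
    rewrite /B.
    have -> : (x - s) * P - (m - f x) - ((y - s) * P - (m - f y)) =
              (x - y) * P + (f x - f y) by ring.
    apply: (le_trans (ler_normD _ _)).
    rewrite normrM (ger0_norm P0) mulrC [in X in _ <= X]mulrDl.
    apply: lerD => //; apply: fL; apply/andP; split; lra.
  have [z zin Bz] : exists2 z, z \in `[s, t] & B z = EE s t m / 2.
    apply: IVT => //.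
    have -> : B s = 0 by rewrite /B fs; ring.
    have -> : B t = EE s t m by rewrite /B /EE fs; ring.
    rewrite ge_min le_max; apply/andP; split; apply/orP; [left|right]; lra.
  move: zin; rewrite in_itv /= => /andP[sz zt].
  have [tau tauin Htau] := EVT_max zt (fcont (le_trans s0 sz) t1).
  move: tauin; rewrite in_itv /= => /andP[ztau taut].
  have h := Hu s0 sz zt t1.
  have h1 := OS s z m s0 sz (le_trans zt t1)
     (fun x a b => Hx x a (le_trans b zt)) (or_introl fs).
  have Htau' : forall x, z <= x -> x <= t -> f x <= f tau.
    by move=> x a b; apply: Htau; rewrite in_itv /= a b.
  have h2 := GS z tau t (le_trans s0 sz) ztau taut t1 Htau'.
  have e1 : EE s z m = EE s t m / 2 by rewrite -Bz /B /EE fs; ring.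
  have fzt : f z <= f tau by apply: Htau' => //.
  have ftm' : f tau <= m by apply: Hx; lra.
  have e2 : EE z t (f tau) <= EE s t m / 2.
    have id : EE s t m - EE z t (f tau) - B z = 2 * (f tau - f z).
      by rewrite /EE /B fs; ring.
    lra.
  have e2' := dv_le j e2.
  rewrite e1 in h1.
  have hm : Num.max (Hf s z) (Hf z t) <= m + dv (EE s t m / 2) j + (cst j + 2 * dl) - dl.
    apply: maxr_le'; [exact: ar1 dl0 h1 | exact: ar2 h2 e2' ftm'].
  exact: ar3 h hm.
-
  pose B z := (t - z) * P - (m - f z).
  have EE0 : 0 <= EE s t m by have [] := EE_ge0 s0 st t1; rewrite ft.
  have Bcont : {within `[s, t], continuous B}.
    apply: (@lip_within_R _ _ _ (P + P)) => x y /andP[sx xt] /andP[sy yt].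
    rewrite /B.
    have -> : (t - x) * P - (m - f x) - ((t - y) * P - (m - f y)) =
              (y - x) * P + (f x - f y) by ring.
    apply: (le_trans (ler_normD _ _)).
    rewrite normrM (ger0_norm P0) mulrC [in X in _ <= X]mulrDl distrC.
    apply: lerD => //; apply: fL; apply/andP; split; lra.
  have [z zin Bz] : exists2 z, z \in `[s, t] & B z = EE s t m / 2.
    apply: IVT => //.
    have -> : B t = 0 by rewrite /B ft; ring.
    have -> : B s = EE s t m by rewrite /B /EE ft; ring.
    rewrite ge_min le_max; apply/andP; split; apply/orP; [right|left]; lra.
  move: zin; rewrite in_itv /= => /andP[sz zt].
  have [tau tauin Htau] := EVT_max sz (fcont s0 (le_trans zt t1)).
  move: tauin; rewrite in_itv /= => /andP[stau tauz].
  have h := Hu s0 sz zt t1.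
  have h2 := OS z t m (le_trans s0 sz) zt t1
     (fun x a b => Hx x (le_trans sz a) b) (or_intror ft).
  have Htau' : forall x, s <= x -> x <= z -> f x <= f tau.
    by move=> x a b; apply: Htau; rewrite in_itv /= a b.
  have h1 := GS s tau z s0 stau tauz (le_trans zt t1) Htau'.
  have e1 : EE z t m = EE s t m / 2 by rewrite -Bz /B /EE ft; ring.
  have fzt : f z <= f tau by apply: Htau' => //.
  have ftm' : f tau <= m by apply: Hx; lra.
  have e2 : EE s z (f tau) <= EE s t m / 2.
    have id : EE s t m - EE s z (f tau) - B z = 2 * (f tau - f z).
      by rewrite /EE /B ft; ring.
    lra.
  have e2' := dv_le j e2.
  rewrite e1 in h2.
  have hm : Num.max (Hf s z) (Hf z t) <= m + dv (EE s t m / 2) j + (cst j + 2 * dl) - dl.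
    apply: maxr_le'; [exact: ar2 h1 e2' ftm' | exact: ar1 dl0 h2].
  exact: ar3 h hm.
Qed.

Lemma one_sided j : OneSided j.
Proof. elim: j => [|j IH]; [exact: one_sided0 | exact: one_sided_step]. Qed.


Lemma core_final D : P <= D -> 2 * Hf 0 1 = f 0 + f 1 + D ->
  exists2 tau, 0 <= tau <= 1 & D - 20 * dl <= `|f tau - f 0| + `|f 1 - f tau|.
Proof.
move=> PD HD.
have [tau tauin Htau] := EVT_max ler01 (fcont (lexx 0) (lexx 1)).
move: tauin; rewrite in_itv /= => /andP[t0 t1].
have Htau' : forall x, 0 <= x -> x <= 1 -> f x <= f tau.
  by move=> x a b; apply: Htau; rewrite in_itv /= a b.
have G := general_from (one_sided 2) (lexx 0) t0 t1 (lexx 1) Htau'.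
exists tau; first by rewrite t0 t1.
have d4 : 4 * dv (EE 0 1 (f tau)) 2 = EE 0 1 (f tau).
  by rewrite /dv expr2; field.
rewrite /cst in G.
have := ar4 dl0 PD HD G d4 => H.
apply: (le_trans H); apply: lerD; [|rewrite -normrN opprB]; exact: ler_norm.
Qed.

End Core.


Lemma ar_lip (R : realFieldType) (hx hy gx gy D e : R) :
  `|hx - gx| <= e / 2 -> `|hy - gy| <= e / 2 -> `|gx - gy| <= D -> `|hx - hy| <= D + e.
Proof. rewrite !ler_norml => /andP[? ?] /andP[? ?] /andP[? ?]; apply/andP; split; lra. Qed.

Lemma ar_ultra (R : realFieldType) (t a b c hx hy hz dxy dyz dxz dl e : R) :
 `|hx - (t - a)| <= e / 2 -> `|hy - (t - b)| <= e / 2 -> `|hz - (t - c)| <= e / 2 ->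
 Num.min ((a + b - dxy) / 2) ((b + c - dyz) / 2) - dl <= (a + c - dxz) / 2 ->
 (hx + hz + dxz) / 2 <= Num.max ((hx + hy + dxy) / 2) ((hy + hz + dyz) / 2) + dl + e.
Proof.
rewrite !ler_norml => /andP[? ?] /andP[? ?] /andP[? ?].
rewrite minEle; case: ifP => H H2.
  have : (hx + hz + dxz) / 2 - dl - e <= Num.max ((hx + hy + dxy) / 2) ((hy + hz + dyz) / 2).
    by rewrite le_max; apply/orP; left; lra.
  lra.
have : (hx + hz + dxz) / 2 - dl - e <= Num.max ((hx + hy + dxy) / 2) ((hy + hz + dyz) / 2).
  by rewrite le_max; apply/orP; right; lra.
lra.
Qed.

Section Height.
Context {R : realType} {X : metricType R} (r : R -> X).
Hypothesis hr : geodesic_ray r.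
Local Notation d := (@mdist R X).

Lemma height_cvg x : (fun t => t - d x (r t)) @ +oo --> height r x.
Proof.
pose g t := Num.max t 0 - d x (r (Num.max t 0)).
have nd : nondecreasing_fun g.
  move=> a b ab; rewrite /g.
  set a' := Num.max a 0; set b' := Num.max b 0.
  have a0 : 0 <= a' by rewrite le_max lexx orbT.
  have b0 : 0 <= b' by rewrite le_max lexx orbT.
  have ab' : a' <= b' by rewrite /a' /b' ge_max !le_max ab lexx /= orbT.
  have tri := metric_triangle x (r a') (r b').
  rewrite (hr a0 b0) distrC ger0_norm ?subr_ge0 // in tri.
  lra.
have ub : has_ubound (range g).
  exists (d x (r 0)) => _ [t _ <-]; rewrite /g.
  set t' := Num.max t 0.
  have t0 : 0 <= t' by rewrite le_max lexx orbT.
  have tri := metric_triangle (r 0) x (r t').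
  rewrite (hr (lexx 0) t0) sub0r normrN ger0_norm // metric_sym in tri.
  lra.
have cg := nondecreasing_cvgr nd ub.
have cf : (fun t => t - d x (r t)) @ +oo --> sup (range g).
  apply: cvg_trans cg; apply: near_eq_cvg.
  near=> t; rewrite /g.
  have t0 : 0 <= t by near: t; apply: nbhs_pinfty_ge; rewrite num_real.
  by rewrite /g (max_idPl t0).
by rewrite /height (cvg_lim _ cf).
Unshelve. all: by end_near.
Qed.

Lemma h_approx x e : 0 < e -> \forall t \near +oo, `|height r x - (t - d x (r t))| <= e.
Proof. move=> e0; have := cvgr_dist_le _ _ (@height_cvg x) e e0. move=> H. exact: H. Qed.

Lemma h_lip x y : `|height r x - height r y| <= d x y.
Proof.
apply/ler_addgt0Pr => e e0.
have e2 : 0 < e / 2 by rewrite divr_gt0.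
near (+oo : set_system R) => t.
have h1 : `|height r x - (t - d x (r t))| <= e / 2 by near: t; apply: h_approx.
have h2 : `|height r y - (t - d y (r t))| <= e / 2 by near: t; apply: h_approx.
apply: (ar_lip h1 h2).
have t1 := metric_triangle y x (r t).
have t2 := metric_triangle x y (r t).
rewrite (metric_sym y x) in t1.
rewrite ler_norml; apply/andP; split; lra.
Unshelve. all: by end_near.
Qed.

Definition HH x y := (height r x + height r y + d x y) / 2.

Lemma ultra delta : hyperbolic (X := X) delta -> forall x y z : X,
  HH x z <= Num.max (HH x y) (HH y z) + delta.
Proof.
move=> hyp x y z.
apply/ler_addgt0Pr => e e0.
have e2 : 0 < e / 2 by rewrite divr_gt0.
near (+oo : set_system R) => t.
have h1 : `|height r x - (t - d x (r t))| <= e / 2 by near: t; apply: h_approx.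
have h2 : `|height r y - (t - d y (r t))| <= e / 2 by near: t; apply: h_approx.
have h3 : `|height r z - (t - d z (r t))| <= e / 2 by near: t; apply: h_approx.
have H := hyp (r t) x y z; rewrite /gromov_product in H.
rewrite /HH.
exact: ar_ultra h1 h2 h3 H.
Unshelve. all: by end_near.
Qed.

End Height.



Lemma near_dist (R : realType) (x e : R) : 0 < e -> \forall t \near x, `|x - t| < e.
Proof. move=> e0. have H : (x --> x)%classic by apply: cvg_id.
exact: ((@fcvgrPdist_lt _ _ (nbhs x) (nbhs_filter x) x).1 H e e0). Qed.

Lemma lip_within_X (R : realType) (X : metricType R) (a b L : R) (g : R -> X) :
  (forall s t, a <= s <= b -> a <= t <= b -> mdist (g s) (g t) <= L * `|s - t|) ->
  {within `[a, b], continuous g}.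
Proof.
move=> Lg; apply/subspace_continuousP => x Ax.
apply/metricType_numDomainType.cvgrPdist_lt => e e0.
have Lp : 0 < `|L| + 1 by rewrite ltr_pwDr // normr_ge0.
have H := near_dist x (divr_gt0 e0 Lp).
rewrite near_withinE; near=> t => tA.
have xab : a <= x <= b by move: Ax; rewrite /= in_itv.
have tab : a <= t <= b by move: tA; rewrite /= in_itv.
apply: (le_lt_trans (Lg x t xab tab)).
apply: (@le_lt_trans _ _ ((`|L| + 1) * `|x - t|)).
  apply: ler_wpM2r; first exact: normr_ge0.
  by rewrite (le_trans (ler_norm L)) // lerDl.
rewrite mulrC -ltr_pdivlMr //. near: t. exact: H.
Unshelve. all: by end_near.
Qed.

Lemma sum_lip (R : realType) (F : R -> R -> R) (D : R) (s : seq R) :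
  itv_partition 0 1 s ->
  (forall a b, 0 <= a <= 1 -> 0 <= b <= 1 -> F a b <= `|b - a| * D) ->
  \sum_(0 <= n < size s) F (nth 1 (0 :: s) n) (nth 1 (0 :: s) n.+1) <= D.
Proof.
move=> ps HF.
have var : variation 0 1 id s = 1 - 0.
  apply: nondecreasing_variation => //.
have mem : forall n, (n < (size s).+1)%N -> 0 <= nth 1 (0 :: s) n <= 1.
  move=> n ns; apply/andP; split.
    exact: (itv_partition_nth_ge ns ps).
  exact: (itv_partition_nth_le ns ps).
apply: (@le_trans _ _ (\sum_(0 <= n < size s)
   `|nth 1 (0 :: s) n.+1 - nth 1 (0 :: s) n| * D)).
  apply: ler_sum_nat => n /andP[_ ns].
  apply: HF; apply: mem => //; exact: ltnW.
rewrite -mulr_suml.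
move: var; rewrite /variation /= => ->.
by rewrite subr0 mul1r.
Qed.

Section DP.
Context {R : realType} {X : metricType R} (N : R -> R -> R) (h : X -> R).
Hypothesis hN : admissible_monotone_norm N.
Hypothesis hlip : forall x y, `|h x - h y| <= mdist x y.
Local Notation d := (@mdist R X).

Lemma N_lower a b : (`|a| + `|b|) / 2 <= N a b.
Proof. by case: hN => _ [_ H _]; apply: H. Qed.

Lemma N_diag a : 0 <= a -> N a a = a.
Proof.
move=> a0; case: hN => [[_ _ H _] [H1 _ _]].
by have := H a 1 1; rewrite !mulr1 H1 mulr1 ger0_norm.
Qed.

Lemma N_mono a b a' b' : 0 <= a -> 0 <= b -> a <= a' -> b <= b' -> N a b <= N a' b'.
Proof. by case: hN => _ [_ _ H]; apply: H. Qed.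

Lemma dprime_ge x y : ((N (d x y) `|h x - h y|)%:E <= dprime N h x y)%E.
Proof.
rewrite /dprime; apply: le_ereal_inf_tmp => _ [c [c0 c1 _] <-].
rewrite /Nlength; apply: ereal_sup_ubound; exists [:: 1].
  exact: itv_partition1 ltr01.
by rewrite /= big_nat1 /= c0 c1.
Qed.

Lemma geod_cont p q g : geodesic_for d p q g -> {within `[0, 1], continuous g}.
Proof.
case=> _ _ Hg; apply: (@lip_within_X _ _ _ _ (d p q)) => s t hs ht.
by rewrite Hg // mulrC.
Qed.

Lemma geod_bound p q g : geodesic_for d p q g -> forall a b, 0 <= a <= 1 -> 0 <= b <= 1 ->
  N (d (g a) (g b)) `|h (g a) - h (g b)| <= `|b - a| * d p q.
Proof.
case=> _ _ Hg a b ha hb.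
have e := Hg a b ha hb.
have D0 : 0 <= `|a - b| * d p q by rewrite mulr_ge0 // mdist_ge0.
apply: (@le_trans _ _ (N (d (g a) (g b)) (d (g a) (g b)))).
  by apply: N_mono => //; exact: mdist_ge0.
by rewrite N_diag ?mdist_ge0 // e distrC.
Qed.

Lemma dprime_le p q g : geodesic_for d p q g -> (dprime N h p q <= (d p q)%:E)%E.
Proof.
move=> hg; apply: (@le_trans _ _ (Nlength N h g)).
  apply: ereal_inf_lbound; exists g => //.
  by have [g0 g1 _] := hg; split => //; exact: geod_cont hg.
apply: ge_ereal_sup => _ [s ps <-]; rewrite lee_fin.
apply: (@sum_lip _ (fun a b => N (d (g a) (g b)) `|h (g a) - h (g b)|) (d p q) s ps) => a b ha hb.
by apply: (geod_bound hg).
Qed.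

Lemma var_geod p q g : geodesic_for d p q g -> (path_variation h g <= (d p q)%:E)%E.
Proof.
move=> hg; rewrite /path_variation /total_variation.
apply: ge_ereal_sup => _ [v [s ps <-] <-]; rewrite lee_fin /variation.
apply: (@sum_lip _ (fun a b => `|h (g b) - h (g a)|) (d p q) s ps) => a b ha hb.
case: hg => _ _ Hg.
apply: (le_trans (hlip _ _)); rewrite Hg // distrC.
Qed.

End DP.


Local Close Scope classical_set_scope.
Unset Implicit Arguments.

Theorem mainTheorem10 (R : realType) (delta : R) :
  exists C : R,
  forall (X : metricType R) (r : R -> X) (N : R -> R -> R),
    proper_space (X := X) -> geodesically_complete (X := X) ->
    hyperbolic (X := X) delta -> busemann_space (X := X) ->
    geodesic_ray r -> vertically_convergent r ->
    admissible_monotone_norm N ->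
    forall (p q : X) (gamma' gamma : R -> X),
      egeodesic_for (dprime N (height r)) p q gamma' ->
      geodesic_for (@mdist R X) p q gamma ->
      (path_variation (height r) gamma - C%:E <=
         path_variation (height r) gamma')%E.
Proof.
exists (20 * delta).
move=> X r N _ _ hyp _ hr _ hN p q g' g hg' hg.
have hlip : forall x y, `|height r x - height r y| <= mdist x y.
  by move=> x y; apply: h_lip.
have dl0 : 0 <= delta.
  have := hyp p p p p; rewrite /gromov_product !mdistxx minxx.
  lra.
set D := mdist p q.
have dle := dprime_le hN hlip hg.
have dge := dprime_ge N (height r) p q.
have Nge0 : forall a b, 0 <= N a b by case: hN => [[H _ _ _] _].
have fin : dprime N (height r) p q \is a fin_num.
  rewrite fin_numE; apply/andP; split.
    apply/eqP => H; rewrite H in dge; move: dge; rewrite leeNy_eq //.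
  apply/eqP => H; rewrite H in dle; move: dle; rewrite leye_eq //.
set P := fine (dprime N (height r) p q).
have PE : dprime N (height r) p q = P%:E by rewrite /P fineK.
have P0 : 0 <= P.
  by rewrite -lee_fin -PE (le_trans _ dge) // lee_fin Nge0.
have PD : P <= D by rewrite -lee_fin -PE.
have key : forall s t, 0 <= s <= 1 -> 0 <= t <= 1 ->
    N (mdist (g' s) (g' t)) `|height r (g' s) - height r (g' t)| <= `|s - t| * P.
  move=> s t hs ht; case: hg' => _ _ Hg.
  have := dprime_ge N (height r) (g' s) (g' t).
  by rewrite Hg // PE -EFinM lee_fin.
pose f t := height r (g' t).
pose Hf s t := HH r (g' s) (g' t).
have low : forall s t, 0 <= s <= 1 -> 0 <= t <= 1 ->
    mdist (g' s) (g' t) + `|f s - f t| <= 2 * (`|s - t| * P).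
  move=> s t hs ht; have := key s t hs ht.
  have := N_lower hN (mdist (g' s) (g' t)) `|height r (g' s) - height r (g' t)|.
  rewrite normr_id ger0_norm ?mdist_ge0 // /f => H1 H2.
  lra.
have fL : forall s t, 0 <= s <= 1 -> 0 <= t <= 1 -> `|f s - f t| <= P * `|s - t|.
  move=> s t hs ht; have := low s t hs ht; have := hlip (g' s) (g' t).
  rewrite /f mulrC; lra.
have Hb : forall s t, 0 <= s -> s <= t -> t <= 1 ->
    2 * Hf s t <= f s + f t + 2 * ((t - s) * P) - `|f s - f t|.
  move=> s t s0 st t1.
  have hs : 0 <= s <= 1 by apply/andP; split; lra.
  have ht : 0 <= t <= 1 by apply/andP; split; lra.
  have := low s t hs ht.
  have st' : 0 <= t - s by rewrite subr_ge0.
  rewrite (distrC s t) (ger0_norm st') /Hf /HH /f; lra.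
have Hu : forall s z t, 0 <= s -> s <= z -> z <= t -> t <= 1 ->
    Hf s t <= Num.max (Hf s z) (Hf z t) + delta.
  by move=> s z t _ _ _ _; apply: ultra.
have HD : 2 * Hf 0 1 = f 0 + f 1 + D.
  by case: hg' => g0 g1 _; rewrite /Hf /HH /f g0 g1 /D; field.
have [tau tauin Htau] := core_final dl0 P0 fL Hb Hu PD HD.
have tvb : ((`|f tau - f 0| + `|f 1 - f tau|)%:E <= path_variation (height r) g')%E.
  move: tauin => /andP[t0 t1].
  rewrite /path_variation (@total_variationD _ 0 1 tau) // EFinD.
  by apply: leeD; apply: total_variation_ge.
have vg := var_geod hlip hg.
apply: (le_trans (leeB vg (lexx (20 * delta)%:E))).
rewrite -EFinB; apply: le_trans tvb; rewrite lee_fin.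
exact: Htau.
Qed.
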